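(* Let $H^0(\mathcal A_\theta^{alg},{}_{\omega}\mathcal A_\theta^{alg\ast})$ be the space of formal series $\varphi=\sum\varphi_{n,m}U_1^nU_2^m$ with $(\omega\cdot a)\varphi=\varphi a$ for all $a\in\mathcal A_\theta^{alg}$, and let $\mathbb Z_3=\langle\omega\rangle$ act on it by applying $\omega$ termwise. Then the subspace of $\mathbb Z_3$-invariant elements satisfies $H^0(\mathcal A_\theta^{alg},{}_{\omega}\mathcal A_\theta^{alg\ast})^{\mathbb Z_3}\cong\mathbb C^3$.
   Context: Let $\theta\in\mathbb R\setminus\mathbb Q$, $\lambda=e^{2\pi i\theta}$, $\lambda^s:=e^{2\pi i\theta s}$. $\mathcal A_\theta^{alg}$ is the complex algebra of finite sums $\sum a_{n,m}U_1^nU_2^m$ with $U_1,U_2$ invertible and $U_2U_1=\lambda U_1U_2$; formal series $\sum_{(n,m)\in\mathbb Z^2}\varphi_{n,m}U_1^nU_2^m$ with arbitrary coefficients form an $\mathcal A_\theta^{alg}$-bimodule via multiplication. $\omega$ is the automorphism with $\omega\cdot U_1=U_2^{-1}$, $\omega\cdot U_2=\lambda^{-1/2}U_1U_2^{-1}$; it has order $3$. Termwise action: $\omega\cdot\sum\varphi_{n,m}U_1^nU_2^m=\sum\varphi_{n,m}\,\omega\cdot(U_1^nU_2^m)$, which is again a formal series. *)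

(* Defs.v *)
From Stdlib Require Import Reals ZArith List.
From Coquelicot Require Import Coquelicot.

Definition lam_pow (theta s : R) : C :=
  (cos (2 * PI * theta * s), sin (2 * PI * theta * s)).

(* A monomial  c * U1^a * U2^b  is represented by (c, (a, b)). *)
Definition Mon := (C * (Z * Z))%type.

Definition mon_one : Mon := (RtoC 1, (0%Z, 0%Z)).

(* Product in A_theta, using U2^b U1^a' = lambda^(b a') U1^a' U2^b. *)
Definition mmul (theta : R) (x y : Mon) : Mon :=
  match x, y with
  | (c, (a, b)), (d, (a', b')) =>
      (Cmult (Cmult c d) (lam_pow theta (IZR (b * a'))), ((a + a')%Z, (b + b')%Z))
  end.

Definition minv (theta : R) (x : Mon) : Mon :=
  match x with
  | (c, (a, b)) => (Cmult (Cinv c) (lam_pow theta (IZR (a * b))), ((- a)%Z, (- b)%Z))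
  end.

Definition mpow (theta : R) (x : Mon) (n : Z) : Mon :=
  match n with
  | Z0 => mon_one
  | Zpos p => Nat.iter (Pos.to_nat p) (mmul theta x) mon_one
  | Zneg p => Nat.iter (Pos.to_nat p) (mmul theta (minv theta x)) mon_one
  end.

Definition omega_U1 : Mon := (RtoC 1, (0%Z, (-1)%Z)).
Definition omega_U2 (theta : R) : Mon := (lam_pow theta (-1/2), (1%Z, (-1)%Z)).

Definition omega_mon (theta : R) (n m : Z) : Mon :=
  mmul theta (mpow theta omega_U1 n) (mpow theta (omega_U2 theta) m).

Definition omega_monc (theta : R) (x : Mon) : Mon :=
  match x with
  | (c, (a, b)) => let '(d, e) := omega_mon theta a b in (Cmult c d, e)
  end.

(* Elements of A_theta^alg: finite sums of monomials. *)
Definition Alg := list Mon.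

Definition omega_alg (theta : R) (a : Alg) : Alg := map (omega_monc theta) a.

(* Formal series  sum phi(n,m) U1^n U2^m  with arbitrary coefficients. *)
Definition FSeries := (Z -> Z -> C).

Definition series_zero : FSeries := fun _ _ => RtoC 0.
Definition series_add (f g : FSeries) : FSeries := fun p q => Cplus (f p q) (g p q).

Definition lmul_mon (theta : R) (x : Mon) (phi : FSeries) : FSeries :=
  fun p q => match x with
  | (_, (a, b)) => Cmult (fst (mmul theta x (RtoC 1, ((p - a)%Z, (q - b)%Z))))
                         (phi (p - a)%Z (q - b)%Z)
  end.

Definition rmul_mon (theta : R) (phi : FSeries) (x : Mon) : FSeries :=
  fun p q => match x with
  | (_, (a, b)) => Cmult (fst (mmul theta (RtoC 1, ((p - a)%Z, (q - b)%Z)) x))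
                         (phi (p - a)%Z (q - b)%Z)
  end.

Definition lmul (theta : R) (a : Alg) (phi : FSeries) : FSeries :=
  fold_right (fun x acc => series_add (lmul_mon theta x phi) acc) series_zero a.

Definition rmul (theta : R) (phi : FSeries) (a : Alg) : FSeries :=
  fold_right (fun x acc => series_add (rmul_mon theta phi x) acc) series_zero a.

Definition H0_omega (theta : R) (phi : FSeries) : Prop :=
  forall a : Alg, lmul theta (omega_alg theta a) phi = rmul theta phi a.

(* Termwise action of omega on a formal series.  omega.(U1^n U2^m) has exponents
   (m, -n-m); the unique monomial landing on (p,q) is (n,m) = (-p-q, p). *)
Definition omega_series (theta : R) (phi : FSeries) : FSeries :=
  fun p q => Cmult (fst (omega_mon theta (- p - q)%Z p)) (phi (- p - q)%Z p).

Definition Z3_invariant (theta : R) (phi : FSeries) : Prop :=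
  forall k : nat, Nat.iter k (omega_series theta) phi = phi.

Definition irrational (theta : R) : Prop :=
  forall p q : Z, q <> 0%Z -> theta <> IZR p / IZR q.

(* Main.v *)
Require Import Defs.
From Stdlib Require Import Reals ZArith List Lra Lia FunctionalExtensionality.
From Coquelicot Require Import Coquelicot.


Lemma lam_mul th s t : Cmult (lam_pow th s) (lam_pow th t) = lam_pow th (s + t).
Proof.
  unfold lam_pow, Cmult; simpl.
  replace (2 * PI * th * (s + t)) with (2*PI*th*s + 2*PI*th*t) by ring.
  rewrite cos_plus, sin_plus. f_equal; ring.
Qed.

Lemma lam_ext th s t : s = t -> lam_pow th s = lam_pow th t.
Proof. intros ->; reflexivity. Qed.

Lemma lam_0 th s : s = 0 -> lam_pow th s = RtoC 1.
Proof. intros ->. unfold lam_pow, RtoC. rewrite Rmult_0_r, cos_0, sin_0. reflexivity. Qed.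

Lemma Cinv_lam th s : Cinv (lam_pow th s) = lam_pow th (- s).
Proof.
  unfold lam_pow, Cinv; simpl.
  replace (2 * PI * th * - s) with (- (2*PI*th*s)) by ring.
  rewrite cos_neg, sin_neg.
  assert (H := sin2_cos2 (2*PI*th*s)). unfold Rsqr in H.
  replace (cos (2 * PI * th * s) * (cos (2 * PI * th * s) * 1) +
     sin (2 * PI * th * s) * (sin (2 * PI * th * s) * 1)) with 1 by lra.
  f_equal; field.
Qed.

Lemma lam_cancel th A B u v :
  Cmult (lam_pow th A) u = Cmult (lam_pow th B) v -> u = Cmult (lam_pow th (B - A)) v.
Proof.
  intros H.
  transitivity (Cmult (lam_pow th (- A)) (Cmult (lam_pow th A) u)).
  { rewrite Cmult_assoc, lam_mul, (lam_0 th (-A + A)) by ring. ring. }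
  rewrite H, Cmult_assoc, lam_mul. apply (f_equal (fun z => Cmult z v)), lam_ext. ring.
Qed.

Lemma iter_U1 th k : Nat.iter k (mmul th omega_U1) mon_one = (RtoC 1, (0%Z, (- Z.of_nat k)%Z)).
Proof.
  induction k as [|k IH]; [reflexivity|].
  rewrite Nat.iter_succ. rewrite IH. unfold mmul, omega_U1.
  rewrite (lam_0 th (IZR (-1 * 0))) by reflexivity.
  f_equal. { apply injective_projections; simpl; ring. } f_equal; lia.
Qed.

Lemma minv_U1 th : minv th omega_U1 = (RtoC 1, (0%Z, 1%Z)).
Proof.
  unfold minv, omega_U1. rewrite (lam_0 th (IZR (0 * -1))) by reflexivity.
  f_equal. apply injective_projections; simpl; field.
Qed.

Lemma iter_U1' th k : Nat.iter k (mmul th (minv th omega_U1)) mon_one = (RtoC 1, (0%Z, Z.of_nat k)).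
Proof.
  induction k as [|k IH]; [reflexivity|].
  rewrite Nat.iter_succ. rewrite IH, minv_U1. unfold mmul.
  rewrite (lam_0 th (IZR (1 * 0))) by reflexivity.
  f_equal. { apply injective_projections; simpl; ring. } f_equal; lia.
Qed.

Lemma mpow_U1 th n : mpow th omega_U1 n = (RtoC 1, (0%Z, (- n)%Z)).
Proof.
  destruct n as [|p|p]; simpl mpow.
  - reflexivity.
  - rewrite iter_U1, positive_nat_Z. reflexivity.
  - rewrite iter_U1', positive_nat_Z. reflexivity.
Qed.

Lemma iter_U2 th k : Nat.iter k (mmul th (omega_U2 th)) mon_one =
  (lam_pow th (- (IZR (Z.of_nat k) * IZR (Z.of_nat k)) / 2), (Z.of_nat k, (- Z.of_nat k)%Z)).
Proof.
  induction k as [|k IH].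
  - simpl. unfold mon_one. f_equal. symmetry. apply lam_0. field.
  - rewrite Nat.iter_succ. rewrite IH. unfold mmul, omega_U2.
    f_equal; [|f_equal; lia].
    rewrite !lam_mul. apply lam_ext. rewrite Nat2Z.inj_succ, mult_IZR, ?opp_IZR, succ_IZR. field.
Qed.

Lemma minv_U2 th : minv th (omega_U2 th) = (lam_pow th (-1/2), ((-1)%Z, 1%Z)).
Proof.
  unfold minv, omega_U2. rewrite Cinv_lam, lam_mul. f_equal. apply lam_ext.
  rewrite mult_IZR. simpl IZR. field.
Qed.

Lemma iter_U2' th k : Nat.iter k (mmul th (minv th (omega_U2 th))) mon_one =
  (lam_pow th (- (IZR (Z.of_nat k) * IZR (Z.of_nat k)) / 2), ((- Z.of_nat k)%Z, Z.of_nat k)).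
Proof.
  induction k as [|k IH].
  - simpl. unfold mon_one. f_equal. symmetry. apply lam_0. field.
  - rewrite Nat.iter_succ. rewrite IH, minv_U2. unfold mmul.
    f_equal; [|f_equal; lia].
    rewrite !lam_mul. apply lam_ext. rewrite Nat2Z.inj_succ, mult_IZR, ?opp_IZR, succ_IZR. field.
Qed.

Lemma mpow_U2 th n : mpow th (omega_U2 th) n = (lam_pow th (- (IZR n * IZR n) / 2), (n, (- n)%Z)).
Proof.
  destruct n as [|p|p]; simpl mpow.
  - unfold mon_one. f_equal. symmetry. apply lam_0. simpl. field.
  - rewrite iter_U2, positive_nat_Z. reflexivity.
  - rewrite iter_U2', positive_nat_Z. f_equal. apply lam_ext.
    rewrite <- Pos2Z.opp_pos, opp_IZR. field.
Qed.

Lemma omega_mon_eq th n m : omega_mon th n m =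
  (lam_pow th (- (IZR m * IZR m) / 2 - IZR n * IZR m), (m, (- n - m)%Z)).
Proof.
  unfold omega_mon. rewrite mpow_U1, mpow_U2. unfold mmul.
  f_equal; try (f_equal; lia).
  replace (Cmult (Cmult (RtoC 1) (lam_pow th (- (IZR m * IZR m) / 2)))
     (lam_pow th (IZR (- n * m)))) with
     (Cmult (lam_pow th (- (IZR m * IZR m) / 2)) (lam_pow th (IZR (- n * m)))) by ring.
  rewrite lam_mul. apply lam_ext. rewrite mult_IZR, opp_IZR. field.
Qed.

Definition Qf (p q : Z) : R := (IZR p * IZR p + 4 * IZR p * IZR q + IZR q * IZR q) / 6.
Definition Ef th p q : C := lam_pow th (Qf p q).
Definition goodf th (h : Z -> C) : FSeries := fun p q => Cmult (h ((p - q) mod 3)%Z) (Ef th p q).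

Lemma modshift x y k : (x = y + k * 3)%Z -> (x mod 3 = y mod 3)%Z.
Proof. intros ->. apply Z.mod_add. lia. Qed.

Lemma mon_good th h x : lmul_mon th (omega_monc th x) (goodf th h) = rmul_mon th (goodf th h) x.
Proof.
  destruct x as [c [a b]]. unfold omega_monc. rewrite omega_mon_eq.
  apply functional_extensionality; intro p; apply functional_extensionality; intro q.
  unfold lmul_mon, rmul_mon, goodf, mmul, Ef. cbn [fst snd].
  rewrite (modshift (p - b - (q - (- a - b))) (p - a - (q - b)) (- b)) by lia.
  set (hh := h ((p - a - (q - b)) mod 3)%Z).
  transitivity (Cmult (Cmult c hh) (lam_pow th (- (IZR b * IZR b) / 2 - IZR a * IZR b
     + IZR ((- a - b) * (p - b)) + Qf (p - b) (q - (- a - b))))).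
  { rewrite <- !lam_mul. ring. }
  transitivity (Cmult (Cmult c hh) (lam_pow th (IZR ((q - b) * a) + Qf (p - a) (q - b)))).
  2: { rewrite <- !lam_mul. ring. }
  f_equal. apply lam_ext. unfold Qf.
  rewrite !mult_IZR, !minus_IZR, !opp_IZR. field.
Qed.

Lemma good_H0 th h : H0_omega th (goodf th h).
Proof.
  intro a. induction a as [|x a IH]; [reflexivity|].
  simpl. rewrite IH, mon_good. reflexivity.
Qed.

Lemma good_om th h : omega_series th (goodf th h) = goodf th h.
Proof.
  apply functional_extensionality; intro p; apply functional_extensionality; intro q.
  unfold omega_series, goodf, Ef. rewrite omega_mon_eq. cbn [fst].
  rewrite (modshift (- p - q - p) (p - q) (- p)) by lia.
  set (hh := h ((p - q) mod 3)%Z).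
  transitivity (Cmult hh (lam_pow th (- (IZR p * IZR p) / 2 - IZR (- p - q) * IZR p + Qf (- p - q) p))).
  { rewrite <- lam_mul. ring. }
  f_equal. apply lam_ext. unfold Qf. rewrite !minus_IZR, !opp_IZR. field.
Qed.

Lemma good_Z3 th h : Z3_invariant th (goodf th h).
Proof.
  intro k. induction k as [|k IH]; [reflexivity|].
  rewrite Nat.iter_succ, IH. apply good_om.
Qed.

Definition psi th (phi : FSeries) p q : C := Cmult (phi p q) (lam_pow th (- Qf p q)).

Lemma H0_rel th phi : H0_omega th phi -> forall p q a b,
  psi th phi (p - b) (q - (- a - b))%Z = psi th phi (p - a) (q - b)%Z.
Proof.
  intros H p q a b.
  specialize (H ((RtoC 1, (a, b)) :: nil)).
  apply (f_equal (fun f => f p q)) in H.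
  unfold lmul, rmul, omega_alg in H. cbn [map fold_right] in H. unfold series_add, series_zero in H.
  rewrite !Cplus_0_r in H.
  unfold omega_monc in H. rewrite omega_mon_eq in H.
  unfold lmul_mon, rmul_mon, mmul in H. cbn [fst snd] in H.
  set (A := - (IZR b * IZR b) / 2 - IZR a * IZR b) in H.
  set (B := IZR ((- a - b) * (p - b))) in H.
  set (Cc := IZR ((q - b) * a)) in H.
  set (u := phi (p - b)%Z (q - (- a - b))%Z) in H.
  set (v := phi (p - a)%Z (q - b)%Z) in H.
  assert (H2 : Cmult (lam_pow th (A + B)) u = Cmult (lam_pow th Cc) v).
  { rewrite <- lam_mul. revert H. match goal with |- ?L = ?R -> ?L' = ?R' =>
      let e1 := fresh in let e2 := fresh in
      assert (e1 : L' = L) by ring; assert (e2 : R' = R) by ring; congruence end. }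
  apply lam_cancel in H2.
  unfold psi. fold u v. rewrite H2.
  transitivity (Cmult v (lam_pow th (Cc - (A + B) - Qf (p - b) (q - (- a - b))))).
  { rewrite (lam_ext th (Cc - (A + B) - Qf (p - b) (q - (- a - b))) (Cc - (A + B) + - Qf (p - b) (q - (- a - b)))) by ring.
    rewrite <- lam_mul. ring. }
  f_equal. apply lam_ext. unfold A, B, Cc, Qf.
  rewrite !mult_IZR, !minus_IZR, !opp_IZR. field.
Qed.

Lemma H0_rep th phi : H0_omega th phi -> forall p q,
  phi p q = Cmult (psi th phi ((p - q) mod 3)%Z 0%Z) (Ef th p q).
Proof.
  intros H p0 q0.
  assert (Hd := Z_div_mod_eq_full (p0 - q0) 3).
  set (d := ((p0 - q0) / 3)%Z) in *. set (r := ((p0 - q0) mod 3)%Z) in *.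
  assert (Hr := H0_rel th phi H (p0 - d) (q0 - (p0 - r - d) - (- d)) (p0 - r - d) (- d)).
  replace (p0 - d - - d)%Z with p0 in Hr by lia.
  replace (q0 - (p0 - r - d) - - d - (- (p0 - r - d) - - d))%Z with q0 in Hr by lia.
  replace (p0 - d - (p0 - r - d))%Z with r in Hr by lia.
  replace (q0 - (p0 - r - d) - - d - - d)%Z with 0%Z in Hr by lia.
  rewrite <- Hr. unfold psi, Ef. rewrite <- Cmult_assoc, lam_mul, (lam_0 th (- Qf p0 q0 + Qf p0 q0)) by ring.
  ring.
Qed.

Definition ind (i k : Z) : C := if Z.eqb k i then RtoC 1 else RtoC 0.

Lemma Ef_nz_cancel th p q u v : Cmult u (Ef th p q) = Cmult v (Ef th p q) -> u = v.
Proof.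
  intro H. unfold Ef in H.
  transitivity (Cmult (Cmult u (lam_pow th (Qf p q))) (lam_pow th (- Qf p q))).
  { rewrite <- Cmult_assoc, lam_mul, (lam_0 th (Qf p q + - Qf p q)) by ring. ring. }
  rewrite H, <- Cmult_assoc, lam_mul, (lam_0 th (Qf p q + - Qf p q)) by ring. ring.
Qed.

Theorem mainTheorem4 (theta : R) (Htheta : irrational theta) :
  exists b1 b2 b3 : FSeries,
    (H0_omega theta b1 /\ Z3_invariant theta b1) /\
    (H0_omega theta b2 /\ Z3_invariant theta b2) /\
    (H0_omega theta b3 /\ Z3_invariant theta b3) /\
    forall phi : FSeries,
      (H0_omega theta phi /\ Z3_invariant theta phi) <->
      exists! c : C * C * C,
        phi = fun n m =>
          Cplus (Cplus (Cmult (fst (fst c)) (b1 n m)) (Cmult (snd (fst c)) (b2 n m)))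
                (Cmult (snd c) (b3 n m)).
Proof.
  exists (goodf theta (ind 0)), (goodf theta (ind 1)), (goodf theta (ind 2)).
  split; [split; [apply good_H0|apply good_Z3]|].
  split; [split; [apply good_H0|apply good_Z3]|].
  split; [split; [apply good_H0|apply good_Z3]|].
  intro phi. split.
  - intros [H _].
    set (c := ((psi theta phi 0 0, psi theta phi 1 0), psi theta phi 2 0)).
    assert (Hc : phi = fun n m =>
          Cplus (Cplus (Cmult (fst (fst c)) (goodf theta (ind 0) n m))
                       (Cmult (snd (fst c)) (goodf theta (ind 1) n m)))
                (Cmult (snd c) (goodf theta (ind 2) n m))).
    { apply functional_extensionality; intro p; apply functional_extensionality; intro q.
      rewrite (H0_rep theta phi H p q). unfold goodf, c; cbn [fst snd].
      assert (Hb := Z.mod_pos_bound (p - q) 3 ltac:(lia)).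
      destruct (Z.eq_dec ((p - q) mod 3) 0) as [E|E];
        [|destruct (Z.eq_dec ((p - q) mod 3) 1) as [E1|E1];
          [|assert (E2 : ((p - q) mod 3 = 2)%Z) by lia]];
        [rewrite E|rewrite E1|rewrite E2]; unfold ind; simpl Z.eqb; cbv iota beta; ring. }
    exists c. split; [exact Hc|].
    intros [[x1 x2] x3] Hx. rewrite Hx in Hc.
    assert (e00 := f_equal (fun f => f 0%Z 0%Z) Hc).
    assert (e10 := f_equal (fun f => f 1%Z 0%Z) Hc).
    assert (e20 := f_equal (fun f => f 2%Z 0%Z) Hc).
    cbv beta in e00, e10, e20. unfold goodf, ind in e00, e10, e20. simpl Z.eqb in e00, e10, e20. cbv iota beta in e00, e10, e20.
    unfold c in e00, e10, e20; cbn [fst snd] in e00, e10, e20.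
    assert (y1 : x1 = psi theta phi 0 0).
    { apply (Ef_nz_cancel theta 0 0). revert e00. match goal with |- ?L = ?R -> ?L' = ?R' =>
      let a1 := fresh in let a2 := fresh in
      assert (a1 : L' = L) by ring; assert (a2 : R' = R) by ring; congruence end. }
    assert (y2 : x2 = psi theta phi 1 0).
    { apply (Ef_nz_cancel theta 1 0). revert e10. match goal with |- ?L = ?R -> ?L' = ?R' =>
      let a1 := fresh in let a2 := fresh in
      assert (a1 : L' = L) by ring; assert (a2 : R' = R) by ring; congruence end. }
    assert (y3 : x3 = psi theta phi 2 0).
    { apply (Ef_nz_cancel theta 2 0). revert e20. match goal with |- ?L = ?R -> ?L' = ?R' =>
      let a1 := fresh in let a2 := fresh in
      assert (a1 : L' = L) by ring; assert (a2 : R' = R) by ring; congruence end. }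
    unfold c. rewrite y1, y2, y3. reflexivity.
  - intros [c [Hc _]].
    assert (E : phi = goodf theta (fun k => Cplus (Cplus (Cmult (fst (fst c)) (ind 0 k))
         (Cmult (snd (fst c)) (ind 1 k))) (Cmult (snd c) (ind 2 k)))).
    { rewrite Hc. apply functional_extensionality; intro p; apply functional_extensionality; intro q.
      unfold goodf. ring. }
    rewrite E. split; [apply good_H0|apply good_Z3].
Qed.
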